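(* Suppose goods are perishable ($d=\infty$) and the inverse hazard rate $v\mapsto(1-F(v))/f(v)$ is non-increasing. Let $w,w'\in[0,1]$ with $w>w'$, and let $(\hat v^w_k)_k,K_w$ and $(\hat v^{w'}_k)_k,K_{w'}$ be the thresholds and maximal queue lengths defined in the context. Then there exists $\bar k\in\{1,2,\dots,\min\{K_{w'},K_w\}\}$ such that $\hat v^w_k\le\hat v^{w'}_k$ for all $k\le\bar k$, and $\hat v^w_k>\hat v^{w'}_k$ for all $k$ with $\bar k+1\le k\le\min\{K_{w'},K_w\}$.
   Context: Goods arrive by a Poisson process with rate $\mu>0$, buyers by an independent Poisson process with rate $\lambda>0$; values are i.i.d. from $F$ on $[0,1]$ with density $f>0$, $f$ absolutely continuous, $J(v)=v-\frac{1-F(v)}{f(v)}$ strictly increasing with $J(0)<0$; waiting cost $c>0$. A planner maximizes seller revenue plus $w\in[0,1]$ times buyers' net surplus; the optimal policy keeps the buyer ranked $k$-th in the queue iff his value is at least $\hat v^w_k$, where the thresholds are defined with the weighted virtual value $J_w(v):=v-(1-w)\frac{1-F(v)}{f(v)}$ as follows. Let $\rho(v):=\lambda[1-F(v)]/\mu$. $\hat v^w_1=J_w^{-1}(c/\mu)$ if $c/\mu<1$ and $\hat v^w_1=1$ otherwise; for $k\ge2$, if $\hat v^w_{k-1}<1$ and $\mu\int_{\hat v^w_{k-1}}^1\frac{J_w'(v)}{1+\rho(v)+\dots+\rho(v)^{k-1}}dv\ge c$, then $\hat v^w_k$ is the unique $x\in(\hat v^w_{k-1},1]$ with $\mu\int_{\hat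 v^w_{k-1}}^{x}\frac{J_w'(v)}{1+\rho(v)+\dots+\rho(v)^{k-1}}dv=c$; otherwise $\hat v^w_k=1$. $K_w$ is the number of $k$ with $\hat v^w_k<1$. *)

(* Defs.v *)
From HB Require Import structures.
From mathcomp Require Import all_boot all_order all_algebra.
From mathcomp Require Import all_classical all_reals all_analysis.
Set Implicit Arguments. Unset Strict Implicit. Unset Printing Implicit Defensive.
Import Order.TTheory GRing.Theory Num.Theory.
Import numFieldNormedType.Exports.
Local Open Scope classical_set_scope.
Local Open Scope ring_scope.

Section Queue.
Variable R : realType.

Definition leb := (@lebesgue_measure R).

Definition abs_cont (a b : R) (g : R -> R) : Prop :=
  forall eps : R, 0 < eps -> exists2 delta : R, 0 < delta &
    forall (n : nat) (x y : nat -> R),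
      (forall i, (i < n)%N -> a <= x i /\ x i <= y i /\ y i <= b) ->
      (forall i j, (i < j)%N -> (j < n)%N -> y i <= x j \/ y j <= x i) ->
      \sum_(i < n) (y i - x i) < delta ->
      \sum_(i < n) `|g (y i) - g (x i)| < eps.

Definition Jw (F f : R -> R) (w v : R) : R := v - (1 - w) * ((1 - F v) / f v).

Definition is_Jw_deriv (F f : R -> R) (w : R) (Jpw : R -> R) : Prop :=
  measurable_fun `[0, 1 : R]%classic Jpw /\
  {ae leb, forall v : R, `[0, 1]%classic v -> is_derive v 1 (Jw F f w) (Jpw v)}.

Definition rho (lam mu : R) (F : R -> R) (v : R) : R := lam * (1 - F v) / mu.

Definition integrand (lam mu : R) (F Jpw : R -> R) (k : nat) (v : R) : R :=
  Jpw v / \sum_(i < k) rho lam mu F v ^+ i.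

Definition scaled_int (lam mu : R) (F Jpw : R -> R) (k : nat) (a x : R)
  : \bar R :=
  (mu%:E * \int[leb]_(v in `[a, x]%classic) (integrand lam mu F Jpw k v)%:E)%E.

(* vhat_aux n = \hat v^w_{n+1} *)
Fixpoint vhat_aux (lam mu c : R) (F f : R -> R) (w : R) (Jpw : R -> R)
  (n : nat) : R :=
  match n with
  | 0%N =>
      if `[< c / mu < 1 >] then
        xget 1 [set x : R | 0 <= x <= 1 /\ Jw F f w x = c / mu]
      else 1
  | n'.+1 =>
      let p := vhat_aux lam mu c F f w Jpw n' in
      (* here k = n'.+2 *)
      if `[< p < 1 /\ (c%:E <= scaled_int lam mu F Jpw n'.+2 p 1)%E >] then
        xget 1 [set x : R | p < x <= 1 /\
                            scaled_int lam mu F Jpw n'.+2 p x = c%:E]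
      else 1
  end.

(* \hat v^w_k for k >= 1 (the value at k = 0 is meaningless) *)
Definition vhat (lam mu c : R) (F f : R -> R) (w : R) (Jpw : R -> R)
  (k : nat) : R := vhat_aux lam mu c F f w Jpw k.-1.

Definition is_Kw (lam mu c : R) (F f : R -> R) (w : R) (Jpw : R -> R)
  (K : nat) : Prop :=
  card_eq [set k : nat | (0 < k)%N /\ vhat lam mu c F f w Jpw k < 1] `I_K.

End Queue.

(* Main.v *)
Require Import Defs.
From HB Require Import structures.
From mathcomp Require Import all_boot all_order all_algebra.
From mathcomp Require Import all_classical all_reals all_analysis.
From mathcomp Require Import measurable_realfun lra.
Import Order.TTheory GRing.Theory Num.Theory.
Import numFieldNormedType.Exports.
Local Open Scope classical_set_scope.
Local Open Scope ring_scope.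


Lemma card_initial (S : set nat) (K : nat) :
  (forall k, S k -> (0 < k)%N) ->
  (forall k, S k.+1 -> (0 < k)%N -> S k) ->
  card_eq S `I_K -> S 1%N ->
  (1 <= K)%N /\ (forall k, (1 <= k <= K)%N -> S k).
Proof.
move=> S0 Sdn SK S1.
have SK' : card_le `I_K S /\ card_le S `I_K by apply/card_eqPle; rewrite card_eq_sym.
split.
  rewrite -card_le_II; apply: card_le_trans (proj2 SK').
  have e : card_eq (succn @` `I_1) `I_1 by apply: inj_card_eq => a b _ _ [].
  rewrite card_eq_sym card_eq_le in e; case/andP: e => e _.
  apply: card_le_trans e _; apply: subset_card_le => k [j /=]; rewrite ltnS leqn0 => /eqP -> <- //.
move=> k /andP[k1 kK]; apply/not_notP => nSk.
have Sup : forall j, S j -> (j < k)%N.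
  move=> j Sj; rewrite ltnNge; apply/negP => kj; apply: nSk.
  move: j Sj kj; elim => [|j IH] Sj kj; first by have := S0 _ Sj.
  rewrite leq_eqVlt in kj; case/orP: kj => [/eqP -> //|kj].
  apply: IH => //; apply: Sdn => //; exact: leq_ltn_trans k1 kj.
have : card_le `I_K `I_k.-1.
  apply: card_le_trans (proj1 SK') _.
  apply: (@card_le_trans _ _ _ (succn @` `I_k.-1)); last exact: card_image_le.
  apply: subset_card_le => j Sj; exists j.-1; last by rewrite prednK // S0.
  by have := Sup _ Sj; have := S0 _ Sj; case: j {Sj} => //= j _; case: k {k1 kK nSk Sup}.
rewrite card_le_II => Kk.
by move: (leq_trans kK Kk); rewrite leqNgt ltn_predL k1.
Qed.



Lemma xget_lt1 (R : realType) (P : set R) : xget 1 P < 1 -> P (xget 1 P).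
Proof.
have [[y Py]|NP] := pselect (exists y, P y); first by move=> _; apply: xgetPex; exists y.
by rewrite xgetPN ?ltxx // => y Py; apply: NP; exists y.
Qed.

Lemma xget_le1 (R : realType) (P : set R) (Q : R -> Prop) :
  Q 1 -> (forall x, P x -> Q x) -> Q (xget 1 P).
Proof.
move=> Q1 PQ; have [[y Py]|NP] := pselect (exists y, P y).
  by apply: PQ; apply: xgetPex; exists y.
by rewrite xgetPN // => y Py; apply: NP; exists y.
Qed.

Lemma vhat0_spec (R : realType) lam mu c (F f : R -> R) w Jpw :
  vhat_aux lam mu c F f w Jpw 0 < 1 ->
  let x := vhat_aux lam mu c F f w Jpw 0 in 0 <= x <= 1 /\ Jw F f w x = c / mu.
Proof.
rewrite /=; case: ifP => _; last by rewrite ltxx.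
by move/xget_lt1.
Qed.

Lemma vhatS_spec (R : realType) lam mu c (F f : R -> R) w Jpw n :
  vhat_aux lam mu c F f w Jpw n.+1 < 1 ->
  let p := vhat_aux lam mu c F f w Jpw n in
  let x := vhat_aux lam mu c F f w Jpw n.+1 in
  p < 1 /\ p < x <= 1 /\ scaled_int lam mu F Jpw n.+2 p x = c%:E.
Proof.
rewrite /=; case: ifP => [/asboolP [p1 _]|_]; last by rewrite ltxx.
by move/xget_lt1.
Qed.

Lemma vhat_01 (R : realType) lam mu c (F f : R -> R) w Jpw n :
  0 <= vhat_aux lam mu c F f w Jpw n <= 1.
Proof.
elim: n => [|n IH] /=.
  case: ifP => _; last by rewrite ler01 lexx.
  apply: (@xget_le1 R _ (fun x => 0 <= x <= 1)) => [|x [] //]; by rewrite ler01 lexx.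
case: ifP => _; last by rewrite ler01 lexx.
apply: (@xget_le1 R _ (fun x => 0 <= x <= 1)) => [|x [/andP[px ->] _]]; first by rewrite ler01 lexx.
by rewrite andbT (le_trans _ (ltW px)) //; case/andP: IH.
Qed.



Lemma f_cont (R : realType) (f : R -> R) :
  abs_cont 0 1 f -> {within `[0, 1], continuous f}.
Proof.
move=> ac; apply/subspace_continuousP => x /= Ax; apply/cvgrPdist_lt => e e0.
have [d d0 H] := ac e e0.
apply/nbhs_ballP; exists d => // y /= xy Ay.
move: Ax Ay; rewrite !in_itv /= => /andP[x0 x1] /andP[y0 y1].
have key : forall a b, 0 <= a -> a <= b -> b <= 1 -> b - a < d -> `|f b - f a| < e.
  move=> a b a0 ab b1 bad.
  have := H 1%N (fun _ => a) (fun _ => b).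
  rewrite !big_ord1; apply => //.
  by move=> i j ij; rewrite ltnS leqn0 => /eqP j0; move: ij; rewrite j0.
move: xy; rewrite /ball /=.
have [xy|yx] := leP x y.
  rewrite distrC ger0_norm ?subr_ge0 // => /key kk.
  by rewrite distrC; apply: kk.
rewrite gtr0_norm ?subr_gt0 // => /key; apply => //; exact: ltW.
Qed.

Lemma F_cont (R : realType) (F f : R -> R) :
  abs_cont 0 1 f ->
  (forall x : R, 0 <= x <= 1 -> F x = \int[@leb R]_(t in `[0, x]) f t) ->
  {within `[0, 1], continuous F}.
Proof.
move=> ac FE.
have fc := @f_cont _ _ ac.
have intf : (@lebesgue_measure R).-integrable `[0, 1] (EFin \o f).
  apply: continuous_compact_integrable => //; exact: segment_compact.
have := parameterized_integral_continuous ler01 intf.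
apply: subspace_eq_continuous => x; rewrite inE /= in_itv /= => x01.
by rewrite /from_subspace /= FE.
Qed.

Lemma Jw_cont (R : realType) (F f : R -> R) w :
  (forall x : R, 0 <= x <= 1 -> 0 < f x) ->
  {within `[0, 1], continuous F} -> {within `[0, 1], continuous f} ->
  {within `[0, 1], continuous (Jw F f w)}.
Proof.
move=> fpos cF cf; apply/subspace_continuousP => x Ax.
have hF := (subspace_continuousP _ _).1 cF x Ax.
have hf := (subspace_continuousP _ _).1 cf x Ax.
have fx0 : f x != 0.
  by rewrite gt_eqF // fpos //; move: Ax; rewrite /= in_itv.
rewrite /Jw; apply: cvgB; first exact: cvg_within.
apply: cvgM; first exact: cvg_cst.
apply: cvgM; first by apply: cvgB => //; exact: cvg_cst.
exact: cvgV.
Qed.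



Lemma h_ge0 (R : realType) (F f : R -> R) :
  F 1 = 1 ->
  (forall x y : R, 0 <= x -> x <= y -> y <= 1 ->
     (1 - F y) / f y <= (1 - F x) / f x) ->
  forall x, 0 <= x <= 1 -> 0 <= (1 - F x) / f x.
Proof.
move=> F1 hm x /andP[x0 x1].
have := hm x 1 x0 x1 (lexx _); rewrite F1 subrr mul0r; exact.
Qed.

Lemma F_le1 (R : realType) (F f : R -> R) :
  F 1 = 1 ->
  (forall x : R, 0 <= x <= 1 -> 0 < f x) ->
  (forall x y : R, 0 <= x -> x <= y -> y <= 1 ->
     (1 - F y) / f y <= (1 - F x) / f x) ->
  forall x, 0 <= x <= 1 -> F x <= 1.
Proof.
move=> F1 fpos hm x x01.
have := @h_ge0 _ _ _ F1 hm _ x01; rewrite pmulr_lge0 ?invr_gt0 ?fpos // subr_ge0; exact.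
Qed.

Lemma Jw_incr (R : realType) (F f : R -> R) w :
  w <= 1 ->
  (forall x y : R, 0 <= x -> x <= y -> y <= 1 ->
     (1 - F y) / f y <= (1 - F x) / f x) ->
  forall x y, 0 <= x -> x < y -> y <= 1 -> Jw F f w x < Jw F f w y.
Proof.
move=> w1 hm x y x0 xy y1; rewrite /Jw.
have := hm x y x0 (ltW xy) y1 => hxy.
have : (1 - w) * ((1 - F y) / f y) <= (1 - w) * ((1 - F x) / f x).
  by apply: ler_wpM2l; rewrite ?subr_ge0.
move=> H; lra.
Qed.

Lemma vhat0_lt1 (R : realType) lam mu c (F f : R -> R) w Jpw :
  0 < mu -> 0 < c -> c < mu -> w <= 1 ->
  (forall x : R, 0 <= x <= 1 -> 0 < f x) ->
  F 1 = 1 ->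
  (forall x y : R, 0 <= x -> x <= y -> y <= 1 ->
     (1 - F y) / f y <= (1 - F x) / f x) ->
  {within `[0, 1], continuous (Jw F f w)} ->
  vhat_aux lam mu c F f w Jpw 0 < 1.
Proof.
move=> mu0 c0 cmu w1 fpos F1 hm Jc.
have cm1 : c / mu < 1 by rewrite ltr_pdivrMr // mul1r.
have cm0 : 0 < c / mu by rewrite divr_gt0.
have J1 : Jw F f w 1 = 1 by rewrite /Jw F1 subrr mul0r mulr0 subr0.
have J0 : Jw F f w 0 <= 0.
  rewrite /Jw sub0r oppr_le0; apply: mulr_ge0; first by rewrite subr_ge0.
  by apply: (@h_ge0 _ _ _ F1 hm); rewrite lexx ler01.
have [x x01 Jx] : exists2 x, x \in `[(0:R), 1] & Jw F f w x = c / mu.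
  apply: IVT => //; rewrite J1; apply/andP; split.
    by rewrite ge_min; apply/orP; left; apply: (le_trans J0); exact: ltW.
  by rewrite le_max; apply/orP; right; exact: ltW.
rewrite /=; case: ifP => [_|/asboolPn []//].
have : [set x : R | 0 <= x <= 1 /\ Jw F f w x = c / mu] (xget 1 [set x : R | 0 <= x <= 1 /\ Jw F f w x = c / mu]).
  by apply: xgetPex; exists x; split => //; move: x01; rewrite in_itv.
set y := xget _ _; move=> [/andP[y0 y1] Jy].
rewrite lt_neqAle y1 andbT; apply/eqP => y1'.
by move: Jy; rewrite y1' J1 => /eqP; rewrite eq_sym lt_eqF.
Qed.

Lemma base_cmp (R : realType) lam mu c (F f : R -> R) w w' Jpw Jpw' :
  w' < w -> w <= 1 ->
  F 1 = 1 ->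
  (forall x y : R, 0 <= x -> x <= y -> y <= 1 ->
     (1 - F y) / f y <= (1 - F x) / f x) ->
  vhat_aux lam mu c F f w Jpw 0 < 1 -> vhat_aux lam mu c F f w' Jpw' 0 < 1 ->
  vhat_aux lam mu c F f w Jpw 0 <= vhat_aux lam mu c F f w' Jpw' 0.
Proof.
move=> ww w1 F1 hm /vhat0_spec [x01 Jx] /vhat0_spec [x01' Jx'].
set x := vhat_aux _ _ _ _ _ _ _ _ in x01 Jx *.
set x' := vhat_aux _ _ _ _ _ _ _ _ in x01' Jx' *.
rewrite leNgt; apply/negP => x'x.
have hx := @h_ge0 _ _ _ F1 hm _ x01.
have : Jw F f w' x' < Jw F f w' x.
  apply: (@Jw_incr _ F f w' _ hm) => //; first by apply: ltW (lt_le_trans ww w1).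
  - by case/andP: x01'.
  - by case/andP: x01.
have : Jw F f w' x <= Jw F f w x.
  rewrite /Jw; have : (1 - w) * ((1 - F x) / f x) <= (1 - w') * ((1 - F x) / f x) by apply: ler_wpM2r => //; lra.
  lra.
rewrite Jx Jx'; move=> a b; have := lt_le_trans b a; by rewrite ltxx.
Qed.



Lemma deriv_ge0 (R : realType) (g : R -> R) (v l : R) :
  (forall x y, 0 <= x -> x <= y -> y <= 1 -> g x <= g y) -> 0 <= v <= 1 ->
  is_derive v 1 g l -> 0 <= l.
Proof.
move=> gm /andP[v0 v1] [dd <-].
have cv := dd.
have [vlt1|] := ltP v 1.
  apply: (cvgr_to_ge (cvg_dnbhs_at_right cv)).
  near=> h.
  have h0 : 0 < h by near: h; exact: nbhs_right_gt.
  have h1 : h < 1 - v by near: h; apply: nbhs_right_lt; rewrite subr_gt0.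
  rewrite /= scaler1; apply: mulr_ge0; first by rewrite invr_ge0 ltW.
  rewrite subr_ge0; apply: gm => //; try lra.
move=> v1'; have ev : v = 1 by apply/eqP; rewrite eq_le v1.
apply: (cvgr_to_ge (cvg_dnbhs_at_left cv)).
near=> h.
have h0 : h < 0 by near: h; exact: nbhs_left_lt.
have h1 : -1 < h by near: h; apply: nbhs_left_gt; rewrite ltrN10.
rewrite /= scaler1; apply: mulr_le0; first by rewrite invr_le0 ltW.
rewrite subr_le0; apply: gm => //; lra.
Unshelve. all: end_near. Qed.

Lemma ae_facts (R : realType) (F f : R -> R) w w' Jpw Jpw' :
  w' < w -> w <= 1 ->
  (forall x y : R, 0 <= x -> x <= y -> y <= 1 ->
     (1 - F y) / f y <= (1 - F x) / f x) ->
  is_Jw_deriv F f w Jpw -> is_Jw_deriv F f w' Jpw' ->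
  {ae @leb R, forall v : R, `[0, 1]%classic v ->
     0 <= Jpw v /\ Jpw v <= Jpw' v /\ 1 <= Jpw' v}.
Proof.
move=> ww w1 hm [_ H1] [_ H2].
have FF : Filter (almost_everywhere (@leb R)) by apply: ae_filter_ringOfSetsType.
apply: (@filterS2 _ _ FF _ _ _ _ H1 H2) => v D1 D2 v01.
have {D1}D1 := D1 v01; have {D2}D2 := D2 v01.
have v01' : 0 <= v <= 1 by move: v01; rewrite /= in_itv.
split; [|split].
- apply: (@deriv_ge0 R _ v _ _ v01' D1) => x y x0 xy y1.
  have := hm x y x0 xy y1; rewrite /Jw => hxy.
  have : (1 - w) * ((1 - F y) / f y) <= (1 - w) * ((1 - F x) / f x).
    by apply: ler_wpM2l; rewrite ?subr_ge0.
  lra.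
- rewrite -subr_ge0.
  have D := is_deriveB D2 D1.
  apply: (@deriv_ge0 R _ v _ _ v01' D) => x y x0 xy y1 /=.
  have := hm x y x0 xy y1; rewrite /Jw => hxy.
  have : (w - w') * ((1 - F y) / f y) <= (w - w') * ((1 - F x) / f x).
    by apply: ler_wpM2l => //; rewrite subr_ge0 ltW.
  rewrite !fctE; lra.
- rewrite -subr_ge0.
  have D := is_deriveB D2 (is_derive_id v 1).
  apply: (@deriv_ge0 R _ v _ _ v01' D) => x y x0 xy y1 /=.
  have := hm x y x0 xy y1; rewrite /Jw => hxy.
  have : (1 - w') * ((1 - F y) / f y) <= (1 - w') * ((1 - F x) / f x).
    by apply: ler_wpM2l; rewrite ?subr_ge0 //; apply: ltW (lt_le_trans ww w1).
  rewrite !fctE; lra.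
Qed.



Lemma int_lb (R : realType) (g : R -> R) (a b dl : R) : a < b -> 0 < dl ->
  measurable_fun `[a, b[%classic g ->
  {ae @leb R, forall v : R, `[a, b[%classic v -> dl <= g v} -> (forall v, 0 <= g v) ->
  ((dl * (b - a))%:E <= \int[@leb R]_(v in `[a, b[) (g v)%:E)%E.
Proof.
move=> ab dl0 mg ae g0.
have FF : Filter (almost_everywhere (@leb R)) by apply: ae_filter_ringOfSetsType.
have -> : ((dl * (b - a))%:E = \int[@leb R]_(v in `[a, b[) (cst dl%:E) v)%E.
  rewrite integral_cst; last exact: measurable_itv.
  by rewrite /leb; have L := @lebesgue_measure_itv R `[a, b[; rewrite /= lte_fin ab in L; rewrite [X in (_ * X)%E]L -EFinD EFinM.
apply: (@ae_ge0_le_integral _ _ _ (@leb R) `[a, b[%classic (measurable_itv _) (fun v => cst dl%:E v) (fun v => (g v)%:E)).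
- by move=> v _; rewrite lee_fin ltW.
- exact: measurable_cst.
- by move=> v _; rewrite lee_fin.
- by apply/measurable_EFinP.
apply: filterS ae => v H vI.
by rewrite /= lee_fin; apply: H.
Qed.

Lemma int_cmp (R : realType) (u u' : R -> R) (p' p x x' r dl : R) :
  0 <= p' -> p' < p -> p <= x -> x <= x' -> x' <= 1 -> 0 < dl ->
  measurable_fun `[0, 1 : R]%classic u -> measurable_fun `[0, 1 : R]%classic u' ->
  {ae @leb R, forall v : R, `[0, 1 : R]%classic v -> 0 <= u v /\ u v <= u' v /\ dl <= u' v} ->
  (\int[@leb R]_(v in `[p, x]) (u v)%:E)%E = r%:E ->
  (r%:E < \int[@leb R]_(v in `[p', x']) (u' v)%:E)%E.
Proof.
move=> p0 pp px xx x1 dl0 mu mu' ae uE.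
have FF : Filter (almost_everywhere (@leb R)) by apply: ae_filter_ringOfSetsType.
pose up := fun v => Num.max (u v) 0.
pose up' := fun v => Num.max (u' v) 0.
have m01 : measurable (`[0, 1 : R]%classic : set R) by exact: measurable_itv.
have mup : measurable_fun `[0, 1 : R]%classic up.
  exact: (measurable_realfun.measurable_maxr mu (measurable_cst (0:R))).
have mup' : measurable_fun `[0, 1 : R]%classic up'.
  exact: (measurable_realfun.measurable_maxr mu' (measurable_cst (0:R))).
have sub : forall a b : R, 0 <= a -> b <= 1 -> `[a, b]%classic `<=` (`[0, 1 : R]%classic : set R).
  move=> a b a0 b1 v /=; rewrite !in_itv /= => /andP[av vb].
  by rewrite (le_trans a0 av) (le_trans vb b1).
have mS : forall a b : R, forall (g : R -> R), 0 <= a -> b <= 1 -> measurable_fun `[0, 1 : R]%classic g ->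
    measurable_fun `[a, b]%classic (fun v => (g v)%:E).
  move=> a b g a0 b1 mg; apply/measurable_EFinP.
  by apply: measurable_funS mg => //; exact: sub.
have p'0 : 0 <= p by lra.
have xx1 : x <= 1 by lra.
have p1 : p <= 1 by lra.
have eq1 : (\int[@leb R]_(v in `[p, x]) (u v)%:E = \int[@leb R]_(v in `[p, x]) (up v)%:E)%E.
  apply: (@ae_eq_integral _ _ _ (@leb R) `[p, x]%classic (fun v => (up v)%:E) (fun v => (u v)%:E)); [exact: measurable_itv|exact: mS|exact: mS|].
  apply: filterS ae => v H /(sub _ _ p'0 xx1) /H [u0 _].
  by rewrite /up max_l.
have eq2 : (\int[@leb R]_(v in `[p', x']) (u' v)%:E = \int[@leb R]_(v in `[p', x']) (up' v)%:E)%E.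
  apply: (@ae_eq_integral _ _ _ (@leb R) `[p', x']%classic (fun v => (up' v)%:E) (fun v => (u' v)%:E)); [exact: measurable_itv|exact: mS|exact: mS|].
  apply: filterS ae => v H /(sub _ _ p0 x1) /H [u0 [uu du]].
  by rewrite /up' max_l //; apply: le_trans uu.
rewrite eq2; rewrite eq1 in uE.
have up0 : forall v, (0 <= (up v)%:E)%E by move=> v; rewrite lee_fin /up le_max lexx orbT.
have up0' : forall v, (0 <= (up' v)%:E)%E by move=> v; rewrite lee_fin /up' le_max lexx orbT.
have I1 : (\int[@leb R]_(v in `[p, x]) (up v)%:E <= \int[@leb R]_(v in `[p, x]) (up' v)%:E)%E.
  apply: (@ae_ge0_le_integral _ _ _ (@leb R) `[p, x]%classic (measurable_itv _) (fun v => (up v)%:E) (fun v => (up' v)%:E)) => //; [exact: mS|exact: mS|].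
  apply: filterS ae => v H /(sub _ _ p'0 xx1) /H [u0 [uu du]].
  by rewrite lee_fin /up /up' !max_l //; apply: le_trans uu.
have I2 : (\int[@leb R]_(v in `[p, x]) (up' v)%:E <= \int[@leb R]_(v in `[p, x']) (up' v)%:E)%E.
  apply: (@ge0_subset_integral _ _ _ (@leb R) `[p, x]%classic `[p, x']%classic (measurable_itv _) (measurable_itv _) (fun v => (up' v)%:E)) => //; first exact: mS.
  by apply: subset_itvl; rewrite bnd_simp.
have split : `[p', x']%classic = `[p', p[%classic `|` `[p, x']%classic.
  by apply: itv_bndbnd_setU; rewrite bnd_simp; lra.
have I3 : (\int[@leb R]_(v in `[p', x']) (up' v)%:E =
    \int[@leb R]_(v in `[p', p[) (up' v)%:E + \int[@leb R]_(v in `[p, x']) (up' v)%:E)%E.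
  rewrite split; apply: (@ge0_integral_setU _ _ _ (@leb R) `[p', p[%classic `[p, x']%classic (measurable_itv _) (measurable_itv _) (fun v => (up' v)%:E)) => //.
  - rewrite -split; exact: mS.
  - apply/disj_set2P; rewrite -subset0 => z /=; rewrite !in_itv /= => -[/andP[_ zp] /andP[pz _]].
    by move: (lt_le_trans zp pz); rewrite ltxx.
have I4 : ((dl * (p - p'))%:E <= \int[@leb R]_(v in `[p', p[) (up' v)%:E)%E.
  apply: int_lb => //.
  - apply: measurable_funS mup' => //.
    move=> v /=; rewrite !in_itv /= => /andP[a b]; apply/andP; split; lra.
  - apply: filterS ae => v H vI.
    have v01 : `[0, 1 : R]%classic v.
      by move: vI; rewrite /= !in_itv /= => /andP[a b]; apply/andP; split; lra.
    have [u0 [uu du]] := H v01.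
    by rewrite /up' max_l //; apply: le_trans du; exact: ltW.
rewrite I3 addeC; apply: lte_spaddre => //.
- apply: (lt_le_trans _ I4); rewrite lte_fin; apply: mulr_gt0 => //; lra.
- rewrite -uE; exact: le_trans I1 I2.
Qed.



Lemma F_ge0 (R : realType) (F f : R -> R) :
  (forall x : R, 0 <= x <= 1 -> 0 < f x) ->
  (forall x : R, 0 <= x <= 1 -> F x = \int[@leb R]_(t in `[0, x]) f t) ->
  forall x, 0 <= x <= 1 -> 0 <= F x.
Proof.
move=> fpos FE x /andP[x0 x1]; rewrite FE ?x0 ?x1 //.
apply: Rintegral_ge0 => t /=; rewrite in_itv /= => /andP[t0 tx].
by apply: ltW; apply: fpos; rewrite t0 (le_trans tx x1).
Qed.

Lemma S_cont (R : realType) (lam mu : R) (F : R -> R) n :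
  {within `[0, 1], continuous F} ->
  {within `[0, 1], continuous (fun v => \sum_(i < n) rho lam mu F v ^+ i)}.
Proof.
move=> cF; apply/subspace_continuousP => x Ax; rewrite /from_subspace /=.
have hF := (subspace_continuousP _ _).1 cF x Ax.
have hr : (rho lam mu F) @ within `[0, 1] (nbhs x) --> rho lam mu F x.
  rewrite /rho; apply: cvgM; last exact: cvg_cst.
  apply: cvgM; first exact: cvg_cst.
  by apply: cvgB => //; exact: cvg_cst.
have hp : forall m, (fun v => rho lam mu F v ^+ m) @ within `[0, 1] (nbhs x) --> rho lam mu F x ^+ m.
  elim => [|m IH].
    under eq_fun do rewrite expr0; exact: cvg_cst.
  under eq_fun do rewrite exprS; rewrite exprS; exact: cvgM.
elim: n => [|n IH].
  under eq_fun do rewrite big_ord0; rewrite /= ?big_ord0; exact: cvg_cst.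
under eq_fun do rewrite big_ord_recr /=; rewrite /= big_ord_recr /=.
exact: cvgD.
Qed.

Lemma Sinv_cont (R : realType) (lam mu : R) (F : R -> R) n :
  {within `[0, 1], continuous F} ->
  (forall v, 0 <= v <= 1 -> 0 < \sum_(i < n) rho lam mu F v ^+ i) ->
  {within `[0, 1], continuous (fun v => (\sum_(i < n) rho lam mu F v ^+ i)^-1)}.
Proof.
move=> cF Spos; apply/subspace_continuousP => x Ax; rewrite /from_subspace /=.
have := (subspace_continuousP _ _).1 (@S_cont R lam mu F n cF) x Ax; rewrite /from_subspace /= => hS.
apply: cvgV => //; rewrite gt_eqF // Spos //; by move: Ax; rewrite /= in_itv.
Qed.

Lemma step (R : realType) (lam mu c : R) (F f : R -> R) (w w' : R) (Jpw Jpw' : R -> R) n :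
  0 < lam -> 0 < mu ->
  (forall x : R, 0 <= x <= 1 -> 0 < f x) ->
  (forall x : R, 0 <= x <= 1 -> F x = \int[@leb R]_(t in `[0, x]) f t) ->
  F 1 = 1 -> abs_cont 0 1 f ->
  (forall x y : R, 0 <= x -> x <= y -> y <= 1 ->
     (1 - F y) / f y <= (1 - F x) / f x) ->
  w' < w -> w <= 1 ->
  is_Jw_deriv F f w Jpw -> is_Jw_deriv F f w' Jpw' ->
  vhat_aux lam mu c F f w Jpw n.+1 < 1 ->
  vhat_aux lam mu c F f w' Jpw' n.+1 < 1 ->
  vhat_aux lam mu c F f w' Jpw' n < vhat_aux lam mu c F f w Jpw n ->
  vhat_aux lam mu c F f w' Jpw' n.+1 < vhat_aux lam mu c F f w Jpw n.+1.
Proof.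
move=> lam0 mu0 fpos FE F1 ac hm ww w1 dJ dJ' H1 H2 pp.
have [_ [/andP[px x1] Ex]] := @vhatS_spec _ _ _ _ _ _ _ _ _ H1.
have [_ [/andP[px' x1'] Ex']] := @vhatS_spec _ _ _ _ _ _ _ _ _ H2.
set p := vhat_aux lam mu c F f w Jpw n in pp px Ex.
set x := vhat_aux lam mu c F f w Jpw n.+1 in px x1 Ex *.
set p' := vhat_aux lam mu c F f w' Jpw' n in pp px' Ex'.
set x' := vhat_aux lam mu c F f w' Jpw' n.+1 in px' x1' Ex' *.
have p'0 : 0 <= p' by have /andP[] := vhat_01 R lam mu c F f w' Jpw' n.
rewrite ltNge; apply/negP => xx'.
have cF := @F_cont R F f ac FE.
pose S := fun v => \sum_(i < n.+2) rho lam mu F v ^+ i.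
pose C := \sum_(i < n.+2) (1 + lam / mu) ^+ i.
have rho0 : forall v, 0 <= v <= 1 -> 0 <= rho lam mu F v.
  move=> v v01; rewrite /rho; apply: divr_ge0; last exact: ltW.
  apply: mulr_ge0; first exact: ltW.
  by rewrite subr_ge0 (@F_le1 R F f F1 fpos hm).
have rho1 : forall v, 0 <= v <= 1 -> rho lam mu F v <= 1 + lam / mu.
  move=> v v01; rewrite /rho.
  have F0 := @F_ge0 R F f fpos FE v v01.
  have : lam * (1 - F v) <= lam by rewrite ler_piMr ?(ltW lam0) // lerBlDr lerDl.
  move=> h; have : lam * (1 - F v) / mu <= lam / mu by apply: ler_wpM2r => //; rewrite invr_ge0 ltW.
  move=> h2; apply: (le_trans h2); rewrite lerDr; exact: ler01.
have S1 : forall v, 0 <= v <= 1 -> 1 <= S v.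
  move=> v v01; rewrite /S big_ord_recl expr0 lerDl.
  by apply: sumr_ge0 => i _; apply: exprn_ge0; exact: rho0.
have SC : forall v, 0 <= v <= 1 -> S v <= C.
  move=> v v01; apply: ler_sum => i _; apply: lerXn2r; rewrite ?inE ?rho0 ?rho1 //.
  - by rewrite nnegrE rho0.
  - by rewrite nnegrE; apply: addr_ge0 => //; apply: divr_ge0; apply: ltW.
have C1 : 1 <= C.
  rewrite /C big_ord_recl expr0 lerDl.
  apply: sumr_ge0 => i _; apply: exprn_ge0; apply: addr_ge0 => //.
  by apply: divr_ge0; apply: ltW.
have C0 : 0 < C by apply: lt_le_trans C1.
have Spos : forall v, 0 <= v <= 1 -> 0 < S v by move=> v v01; apply: lt_le_trans (S1 v v01).
have m01 : measurable (`[0, 1 : R]%classic : set R) by exact: measurable_itv.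
have mSi : measurable_fun `[0, 1 : R]%classic (fun v => (S v)^-1).
  by apply: subspace_continuous_measurable_fun => //; apply: Sinv_cont.
have mu_u : measurable_fun `[0, 1 : R]%classic (integrand lam mu F Jpw n.+2).
  exact: measurable_funM dJ.1 mSi.
have mu_u' : measurable_fun `[0, 1 : R]%classic (integrand lam mu F Jpw' n.+2).
  exact: measurable_funM dJ'.1 mSi.
have FF : Filter (almost_everywhere (@leb R)) by apply: ae_filter_ringOfSetsType.
have ae := @ae_facts R F f w w' Jpw Jpw' ww w1 hm dJ dJ'.
have ae' : {ae @leb R, forall v : R, `[0, 1]%classic v ->
    0 <= integrand lam mu F Jpw n.+2 v /\
    integrand lam mu F Jpw n.+2 v <= integrand lam mu F Jpw' n.+2 v /\
    C^-1 <= integrand lam mu F Jpw' n.+2 v}.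
  apply: filterS ae => v H v01.
  have [J0 [JJ J1]] := H v01.
  have v01' : 0 <= v <= 1 by move: v01; rewrite /= in_itv.
  have Sv := Spos v v01'.
  rewrite /integrand -/(S v); split; [|split].
  - by apply: divr_ge0 => //; exact: ltW.
  - by apply: ler_wpM2r => //; rewrite invr_ge0 ltW.
  - apply: (@le_trans _ _ (S v)^-1).
      by rewrite lef_pV2 ?posrE // SC.
    by rewrite ler_peMl // invr_ge0 ltW.
move: Ex Ex'; rewrite /scaled_int.
set I1 := (\int[_]_(v in _) _)%E.
set I2 := (\int[@leb R]_(v in `[p', x']) (integrand lam mu F Jpw' n.+2 v)%:E)%E.
move=> Ex Ex'.
have [r rE] : exists r, I1 = r%:E.
  move: Ex; case: (I1) => [r|  |] E; first by exists r.
  - by move: E; rewrite mulry gtr0_sg // mul1e.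
  - by move: E; rewrite mulrNy gtr0_sg // mul1e.
have := @int_cmp R _ _ p' p x x' r C^-1 p'0 pp (ltW px) xx' x1' ltac:(by rewrite invr_gt0) mu_u mu_u' ae' rE.
rewrite -/I2 -(@lte_pmul2l _ mu%:E) // ?lte_fin // Ex' -rE Ex.
by rewrite ltxx.
Qed.



Lemma K_facts (R : realType) (lam mu c : R) (F f : R -> R) (w : R) (Jpw : R -> R) (K : nat) :
  vhat_aux lam mu c F f w Jpw 0 < 1 ->
  is_Kw lam mu c F f w Jpw K ->
  (1 <= K)%N /\ (forall k, (1 <= k <= K)%N -> vhat lam mu c F f w Jpw k < 1).
Proof.
move=> v0 HK.
have := @card_initial [set k : nat | (0 < k)%N /\ vhat lam mu c F f w Jpw k < 1] K.
case.
- by move=> k [].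
- move=> k [_ Hk] k0; split => //; move: Hk; rewrite /vhat /=.
  case: k k0 => // m _ /= Hm.
  by have [] := @vhatS_spec _ _ _ _ _ _ _ _ _ Hm.
- exact: HK.
- by split.
move=> K1 HkK; split => // k kK; by have [] := HkK k kK.
Qed.

Theorem proposition3 (R : realType) (lam mu c : R) (F f : R -> R)
  (w w' : R) (Jpw Jpw' : R -> R) (Kw Kw' : nat) :
  0 < lam -> 0 < mu -> 0 < c -> c < mu ->
  (* F is a distribution on [0,1] with density f > 0, f absolutely continuous *)
  (forall x : R, 0 <= x <= 1 -> 0 < f x) ->
  (forall x : R, 0 <= x <= 1 -> F x = \int[@leb R]_(t in `[0, x]) f t) ->
  F 1 = 1 ->
  abs_cont 0 1 f ->
  (* J = J_0 strictly increasing on [0,1] with J(0) < 0 *)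
  (forall x y : R, 0 <= x -> x < y -> y <= 1 -> Jw F f 0 x < Jw F f 0 y) ->
  Jw F f 0 0 < 0 ->
  (* inverse hazard rate (1 - F)/f non-increasing on [0,1] *)
  (forall x y : R, 0 <= x -> x <= y -> y <= 1 ->
     (1 - F y) / f y <= (1 - F x) / f x) ->
  (* weights *)
  0 <= w' -> w' < w -> w <= 1 ->
  (* J_w' and J_{w'}' *)
  is_Jw_deriv F f w Jpw -> is_Jw_deriv F f w' Jpw' ->
  (* K_w and K_{w'} *)
  is_Kw lam mu c F f w Jpw Kw -> is_Kw lam mu c F f w' Jpw' Kw' ->
  exists kbar : nat,
    (1 <= kbar <= minn Kw' Kw)%N /\
    (forall k : nat, (1 <= k <= kbar)%N ->
       vhat lam mu c F f w Jpw k <= vhat lam mu c F f w' Jpw' k) /\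
    (forall k : nat, (kbar.+1 <= k <= minn Kw' Kw)%N ->
       vhat lam mu c F f w Jpw k > vhat lam mu c F f w' Jpw' k).
Proof.
move=> lam0 mu0 c0 cmu fpos FE F1 ac _ _ hm w'0 ww w1 dJ dJ' HK HK'.
have w'1 : w' <= 1 by apply: ltW (lt_le_trans ww w1).
have cF := @F_cont R F f ac FE.
have cf := @f_cont R f ac.
have v0 := @vhat0_lt1 R lam mu c F f w Jpw mu0 c0 cmu w1 fpos F1 hm (@Jw_cont R F f w fpos cF cf).
have v0' := @vhat0_lt1 R lam mu c F f w' Jpw' mu0 c0 cmu w'1 fpos F1 hm (@Jw_cont R F f w' fpos cF cf).
have [K1 HK1] := @K_facts _ _ _ _ _ _ _ _ _ v0 HK.
have [K1' HK1'] := @K_facts _ _ _ _ _ _ _ _ _ v0' HK'.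
set M := minn Kw' Kw.
set V := vhat lam mu c F f w Jpw.
set V' := vhat lam mu c F f w' Jpw'.
have M1 : (1 <= M)%N by rewrite leq_min K1 K1'.
have lt1 : forall k, (1 <= k <= M)%N -> V k < 1 /\ V' k < 1.
  move=> k /andP[k1 kM]; split.
    by apply: HK1; rewrite k1 (leq_trans kM) // geq_minr.
  by apply: HK1'; rewrite k1 (leq_trans kM) // geq_minl.
have stepk : forall k, (1 <= k)%N -> (k.+1 <= M)%N -> V' k < V k -> V' k.+1 < V k.+1.
  move=> k k1 kM; case: k k1 kM => // n _ nM.
  have [a a'] := lt1 n.+2 nM.
  rewrite /V /V' /vhat /= => H.
  exact: (@step R lam mu c F f w w' Jpw Jpw' n lam0 mu0 fpos FE F1 ac hm ww w1 dJ dJ' a a' H).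
have P1 : V 1%N <= V' 1%N.
  by apply: (@base_cmp R lam mu c F f w w' Jpw Jpw' ww w1 F1 hm v0 v0').
have fwd : forall j m, (1 <= j)%N -> (j + m <= M)%N -> V' j < V j -> V' (j + m)%N < V (j + m)%N.
  move=> j; elim => [|m IH] j1 jm H; first by rewrite addn0.
  rewrite addnS; apply: stepk; first by rewrite (leq_trans j1) // leq_addr.
    by rewrite -addnS.
  by apply: IH => //; rewrite (leq_trans _ jm) // addnS.
pose Q := fun k => ((1 <= k <= M)%N && `[< forall j, (1 <= j <= k)%N -> V j <= V' j >]).
have Qex : exists k, Q k.
  exists 1%N; rewrite /Q leqnn M1 /=; apply/asboolP => j /andP[j1 j1'].
  by have -> : j = 1%N by apply/eqP; rewrite eqn_leq j1 j1'.
have Qb : forall k, Q k -> (k <= M)%N by move=> k /andP[/andP[]].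
exists (ex_maxn Qex Qb).
case: ex_maxnP => kb /andP[/andP[kb1 kbM] /asboolP Hkb] kbmax.
split; first by rewrite kb1 kbM.
split; first exact: Hkb.
move=> k /andP[kbk kM].
rewrite ltNge; apply/negP => Pk.
have : (k <= kb)%N.
  apply: kbmax; rewrite /Q (leq_trans _ kbk) //= kM; apply/asboolP => j /andP[j1 jk].
  rewrite leNgt; apply/negP => nPj.
  have := fwd j (k - j)%N j1; rewrite subnKC //; move/(_ kM nPj).
  by rewrite ltNge Pk.
by rewrite leqNgt kbk.
Qed.
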